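(* Let $\mathcal{X}$ be a hereditary class above the Bell number with finite distinguishing number $k_{\mathcal{X}}$, and let $\ell_{\mathcal{X}},d_{\mathcal{X}},c_{\mathcal{X}}$ be constants such that every $G\in\mathcal{X}$ contains an induced subgraph $G'$ which is a strong $(\ell_{\mathcal{X}},d_{\mathcal{X}})$-graph with $|V(G)\setminus V(G')|<c_{\mathcal{X}}$ (such constants exist whenever $k_{\mathcal{X}}<\infty$). Then $\mathcal{X}\supseteq\mathcal{P}(w,H)$ for some infinite almost periodic word $w$ and some graph $H$ with loops allowed, of order at most $\ell_{\mathcal{X}}$, on the alphabet of $w$.
   Context: Graphs in classes are finite, simple, loopless; hereditary = closed under induced subgraphs and isomorphism. Speed $\mathcal{X}_n$: number of graphs in $\mathcal{X}$ on vertex set $\{1,\dots,n\}$. Above the Bell number: $\mathcal{X}_n\ge n^{(1-o(1))n}$ (equivalently speed at least the Bell number $B_n$). Distinguishing number: for $X\subseteq V(G)$, disjoint sets $U_1,\dots,U_m$ are distinguished by $X$ if vertices of the same $U_i$ have the same neighbourhood in $X$ and vertices in different $U_i$ have different neighbourhoods in $X$. $k_{\mathcal{X}}=\infty$ if for all $k,m$ some $G\in\mathcal{X}$ and $X\subseteq V(G)$ distinguish at least $m$ sets of size at least $k$; otherwise $k_{\mathcal{X}}$ is the least $k$ such that for some $m$, no vertex subset of a graph in $\mathcal{X}$ distinguishes more than $m$ sets of size at least $k$. $(\ell,d)$-graphs: for $U,W\subseteq V(G)$ let $\Delta(U,W)=\max\{|N(u)\cap W|,|N(w)\cap U|:u\in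 U,w\in W\}$ and $\overline{\Delta}(U,W)$ the same with $\overline N(x)=V(G)\setminus(N(x)\cup\{x\})$ in place of $N(x)$. A partition $\{V_1,\dots,V_{\ell'}\}$ of $V(G)$ is an $(\ell,d)$-partition if $\ell'\le\ell$ and for all (not necessarily distinct) $i,j$, $\Delta(V_i,V_j)\le d$ or $\overline\Delta(V_i,V_j)\le d$. It is strong if each bag has at least $5\cdot 2^{\ell}d$ vertices; a strong $(\ell,d)$-graph is one admitting a strong $(\ell,d)$-partition. Words: maps $w:S\to A$, $S=\{1,\dots,n\}$ or $\mathbb{N}$, $A$ finite; a factor of $w$ is a word $f$ with $f_i=w_{i+s}$ for some fixed $s\ge0$. Infinite $w$ is almost periodic if for each factor $f$ there is $k_f$ such that every factor of length $\ge k_f$ contains $f$. For $H$ with loops allowed on $A$ and $u_1<\dots<u_m$ positive integers, $G_{w,H}(u_1,\dots,u_m)$ has vertex set $\{u_i\}$ and $u_iu_j$ is an edge iff ($|u_i-u_j|=1$ and $w_{u_i}w_{u_j}\notin E(H)$) or ($|u_i-u_j|>1$ and $w_{u_i}w_{u_j}\in E(H)$), loops of $H$ accounting for equal letters. $\mathcal{P}(w,H)$ is the class of graphs isomorphic to some $G_{w,H}(u_1,\dots,u_m)$. *)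

(* Defs.v *)
From mathcomp Require Import all_boot.
Set Implicit Arguments. Unset Strict Implicit. Unset Printing Implicit Defensive.

(* A (labelled) graph on vertex set 'I_n = {0,...,n-1} (standing for {1,...,n})
   is given by its set of ordered adjacent pairs. *)
Definition graph (n : nat) := {set ('I_n * 'I_n)}.

Definition simple_graph n (g : graph n) : Prop :=
  (forall i, (i, i) \notin g) /\ (forall i j, ((i, j) \in g) = ((j, i) \in g)).

Definition graph_class := forall n : nat, graph n -> Prop.

(* Induced subgraph along an injection f : 'I_m -> 'I_n (also covers isomorphisms). *)
Definition induced n m (g : graph n) (f : 'I_m -> 'I_n) : graph m :=
  [set p : 'I_m * 'I_m | (f p.1, f p.2) \in g].

Definition class_of_simple_graphs (X : graph_class) : Prop :=
  forall n (g : graph n), X n g -> simple_graph g.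

Definition hereditary (X : graph_class) : Prop :=
  forall n m (g : graph n) (f : 'I_m -> 'I_n), injective f -> X n g -> X m (induced g f).

(* Above the Bell number: X_n >= n^{(1-o(1))n}, i.e. for every eps = 1/k > 0,
   eventually X_n >= n^{(1-1/k) n}, i.e. X_n^k >= n^{(k-1) n}. *)
Definition above_Bell (X : graph_class) : Prop :=
  forall k, 0 < k -> exists N, forall n, N <= n ->
    exists S : {set graph n}, (forall g, g \in S -> X n g) /\
      n ^ ((k - 1) * n) <= #|S| ^ k.

Definition nbhd n (g : graph n) (x : 'I_n) : {set 'I_n} := [set y | (x, y) \in g].
Definition nonnbhd n (g : graph n) (x : 'I_n) : {set 'I_n} := ~: (nbhd g x :|: [set x]).

Definition distinguishes n m (g : graph n) (Xs : {set 'I_n}) (U : 'I_m -> {set 'I_n}) : Prop :=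
  (forall i j, i != j -> [disjoint U i & U j]) /\
  (forall i u v, u \in U i -> v \in U i -> nbhd g u :&: Xs = nbhd g v :&: Xs) /\
  (forall i j u v, i != j -> u \in U i -> v \in U j -> nbhd g u :&: Xs != nbhd g v :&: Xs).

Definition dist_number_infinite (X : graph_class) : Prop :=
  forall k m, exists n (g : graph n) (Xs : {set 'I_n}) m' (U : 'I_m' -> {set 'I_n}),
    [/\ X n g, m <= m', (forall i, k <= #|U i|) & distinguishes g Xs U].

Definition Delta_le n (N : 'I_n -> {set 'I_n}) (U W : {set 'I_n}) (d : nat) : Prop :=
  (forall u, u \in U -> #|N u :&: W| <= d) /\ (forall w, w \in W -> #|N w :&: U| <= d).

(* strong (l,d)-graph: the bags are the nonempty fibres of p, so there are at most l of them *)
Definition strong_ld_graph n (g : graph n) (l d : nat) : Prop :=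
  exists p : 'I_n -> 'I_l,
    let V := fun i => [set v | p v == i] in
    (forall i j, Delta_le (nbhd g) (V i) (V j) d \/ Delta_le (nonnbhd g) (V i) (V j) d) /\
    (forall i, V i != set0 -> 5 * 2 ^ l * d <= #|V i|).

(* Finite factor of an infinite word (positions 1,2,3,...; w 0 is unused) *)
Definition factor a (w : nat -> 'I_a) (s L : nat) : seq 'I_a :=
  [seq w (s + i) | i <- iota 0 L].

Definition almost_periodic a (w : nat -> 'I_a) : Prop :=
  forall s L, 1 <= s -> exists kf, forall s' L', 1 <= s' -> kf <= L' ->
    infix (factor w s L) (factor w s' L').

Definition natdist (x y : nat) : nat := (x - y) + (y - x).

Definition GwH_adj a (w : nat -> 'I_a) (H : rel 'I_a) (x y : nat) : bool :=
  ((natdist x y == 1) && ~~ H (w x) (w y)) || ((1 < natdist x y) && H (w x) (w y)).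

Definition in_P a (w : nat -> 'I_a) (H : rel 'I_a) m (g : graph m) : Prop :=
  exists u : 'I_m -> nat,
    (forall i, 0 < u i) /\ (forall i j : 'I_m, i < j -> u i < u j) /\
    exists sigma : 'I_m -> 'I_m, bijective sigma /\
      forall i j, ((i, j) \in g) = GwH_adj w H (u (sigma i)) (u (sigma j)).

(* Main.v *)
Require Import Defs.
From Stdlib Require Import ClassicalEpsilon Classical.
From mathcomp Require Import all_boot zify ring.
Lemma arith_core l c s j n t : 0 < s -> j < n -> t * s <= n -> n < t.+1 * s ->
  (2*s) * (l + c + 1 + s) + (2*s) * (l * l) + 2 * s + 1 <= j ->
  (n * l + l * l + n * c + (n + j * (n - t) + s * n)) * (2 * s) < j * ((2 * s - 1) * n).
Proof.
move=> Hs Hjn Hts Hnt Hj.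
have H1 : s * (n - t) <= s * n - n + s by nia.
have H2 : (2 * s) * (j * (n - t)) <= 2 * (j * (s * n - n + s)).
  have -> : (2 * s) * (j * (n - t)) = 2 * (j * (s * (n - t))) by ring.
  by rewrite leq_mul2l leq_mul2l H1 !orbT.
have H3 : n <= s * n by rewrite leq_pmull.
have E2 : j * (s * n - n + s) = j * (s * n) - j * n + j * s.
  by rewrite mulnDr mulnBr.
have H3' : j * n <= j * (s * n) by rewrite leq_mul2l H3 orbT.
have E3 : j * ((2 * s - 1) * n) = 2 * (j * (s * n)) - j * n.
  by rewrite mulnBl mul1n mulnBr; congr (_ - _); ring.
have H4 : (2 * s * (l + c + 1 + s) + 2 * s * (l * l) + 2 * s + 1) * n <= j * n by rewrite leq_mul2r Hj orbT.
have E1 : (n * l + l * l + n * c + (n + j * (n - t) + s * n)) * (2 * s) =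
   2 * s * (n * (l + c + 1 + s)) + 2 * s * (l * l) + (2 * s) * (j * (n - t)) by ring.
have E4 : (2 * s * (l + c + 1 + s) + 2 * s * (l * l) + 2 * s + 1) * n =
   2 * s * (n * (l + c + 1 + s)) + 2 * s * (l * l) * n + 2 * (s * n) + n by ring.
have H5 : 2 * s * (l * l) <= 2 * s * (l * l) * n by rewrite leq_pmulr //; lia.
have H6 : j * s <= s * n by rewrite mulnC leq_mul2l (ltnW Hjn) orbT.
rewrite E1 E3; rewrite E2 in H2; rewrite E4 in H4.
move: H2 H3' H4 H5 H6.
move: (2 * s * (n * (l + c + 1 + s))) (2 * s * (l * l)) (2 * s * (j * (n - t))) (j * (s * n)) (j * n) (j * s) (s * n) (2 * s * (l * l) * n).
lia.
Qed.

Lemma arith l c s j : 0 < s -> (2*s) * (l + c + 1 + s) + (2*s) * (l * l) + 2 * s + 1 <= j ->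
  ((2 ^ 2 ^ j) ^ l * 2 ^ (l * l) * (2 ^ 2 ^ j) ^ c * (2 ^ 2 ^ j * (2 ^ j) ^ (2 ^ j - 2 ^ j %/ s) * (2 ^ s) ^ 2 ^ j)) ^ (2 * s)
   < (2 ^ j) ^ ((2 * s - 1) * 2 ^ j).
Proof.
move=> Hs Hj.
have Hjn : j < 2 ^ j by apply: ltn_expl.
have Hts := leq_divM (2 ^ j) s.
have Hnt := ltn_ceil (2 ^ j) Hs.
rewrite -!expnM -!expnD -!expnM ltn_exp2l //.
move: (2 ^ j %/ s) Hts Hnt => t Hts Hnt.
move: (2 ^ j) Hjn Hts Hnt => n Hjn Hts Hnt.
exact: arith_core.
Qed.

Set Implicit Arguments. Unset Strict Implicit. Unset Printing Implicit Defensive.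


Lemma card_bigcup_le (I : Type) (T : finType) (r : seq I) (P : pred I) (F : I -> {set T}) :
  #|\bigcup_(i <- r | P i) F i| <= \sum_(i <- r | P i) #|F i|.
Proof.
apply: (big_ind2 (fun (A : {set T}) m => #|A| <= m)).
- by rewrite cards0.
- move=> A a B b HA HB; apply: leq_trans (leq_card_setU A B).1 _; exact: leq_add.
- by [].
Qed.

Fixpoint ball (T : finType) (S : rel T) (x : T) (k : nat) : {set T} :=
  if k is k'.+1 then ball S x k' :|: \bigcup_(z in ball S x k') [set y | S z y]
  else [set x].

Lemma ball_sub1 (T : finType) (S : rel T) x k : ball S x k \subset ball S x k.+1.
Proof. by rewrite /= subsetUl. Qed.

Lemma ball_mono (T : finType) (S : rel T) x k k' : k <= k' -> ball S x k \subset ball S x k'.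
Proof.
move=> /subnK <-; elim: (k' - k) => [|e IH] //=.
by apply: subset_trans IH (ball_sub1 _ _ _).
Qed.

Lemma ball_step (T : finType) (S : rel T) x k z y :
  z \in ball S x k -> S z y -> y \in ball S x k.+1.
Proof.
move=> Hz Hzy /=; apply/setUP; right; apply/bigcupP; exists z => //; by rewrite inE.
Qed.

Lemma ball_stepP (T : finType) (S : rel T) x k y :
  y \in ball S x k.+1 -> y \in ball S x k \/ exists2 z, z \in ball S x k & S z y.
Proof.
move=> /= /setUP [H|/bigcupP [z Hz]]; [by left|rewrite inE => H; right; by exists z].
Qed.

Lemma ball_card (T : finType) (S : rel T) D x k :
  (forall z, #|[set y | S z y]| <= D) -> #|ball S x k| <= D.+1 ^ k.
Proof.
move=> HD; elim: k => [|k IH] /=; first by rewrite cards1.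
apply: leq_trans (leq_card_setU _ _).1 _.
apply: leq_trans (leq_add (leqnn _) (card_bigcup_le _ _ _)) _.

apply: (@leq_trans (#|ball S x k| + \sum_(i in ball S x k) D)).
  by apply: leq_add => //; apply: leq_sum => i _; apply: HD.
rewrite sum_nat_const expnS mulSn; apply: leq_add => //.
rewrite mulnC; exact: leq_mul.
Qed.

Lemma ball_path (T : finType) (S : rel T) x p : forall z k,
  z \in ball S x k -> path S z p -> last z p \in ball S x (k + size p).
Proof.
elim: p => [|a p IH] z k Hz /=; first by rewrite addn0.
move=> /andP [Hza Hp]; rewrite addnS -addSn; apply: IH => //; exact: ball_step Hz Hza.
Qed.

Lemma connect_ball (T : finType) (S : rel T) x y : connect S x y -> exists k, y \in ball S x k.
Proof.
move=> /connectP [p Hp ->]; exists (0 + size p); apply: ball_path => //; by rewrite /= inE.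
Qed.

Definition fresh (T : finType) (S : rel T) x k y := (y \in ball S x k) && (if k is k'.+1 then y \notin ball S x k' else true).

Lemma fresh_exists (T : finType) (S : rel T) x k y :
  y \in ball S x k -> exists2 k', k' <= k & fresh S x k' y.
Proof.
elim: k => [|k IH] Hy; first by exists 0 => //; rewrite /fresh Hy.
case Hk: (y \in ball S x k).
- by have [k' Hk' Hf] := IH Hk; exists k' => //; apply: leqW.
- by exists k.+1 => //; rewrite /fresh Hy Hk.
Qed.

Lemma fresh_notin (T : finType) (S : rel T) x k y k' : fresh S x k y -> k' < k -> y \notin ball S x k'.
Proof.
case: k => [|k] //= /andP [_ Hn] Hk'; apply/negP => Hin; move/negP: Hn; apply.
by rewrite ltnS in Hk'; apply: (subsetP (ball_mono S x Hk')).
Qed.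

Lemma layer_path (T : finType) (S : rel T) x k y : fresh S x k y ->
  exists v : nat -> T, [/\ v k = y, (forall i, i <= k -> fresh S x i (v i)) &
     (forall i, i < k -> S (v i) (v i.+1))].
Proof.
elim: k y => [|k IH] y Hy.
  by exists (fun _ => y); split => // i; rewrite leqn0 => /eqP ->.
move: (Hy); rewrite /fresh => /andP [Hin Hn].
case: (ball_stepP Hin) => [Hk|[z Hz Hzy]]; first by rewrite Hk in Hn.
have Hfz : fresh S x k z.
  rewrite /fresh Hz; case: k {IH Hy Hin Hn} Hz Hzy Hn => [|k] // Hz Hzy Hn.
  apply/negP => Hz'; move/negP: Hn; apply; exact: ball_step Hz' Hzy.
have [v [Hvk Hvf Hvs]] := IH z Hfz.
exists (fun i => if i == k.+1 then y else v i); split.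
- by rewrite eqxx.
- move=> i Hi; case: (i =P k.+1) => [->|Hne]; first by rewrite Hin Hn.
  apply: Hvf; lia.
- move=> i Hi; have -> : (i == k.+1) = false by apply/eqP; lia.
  case: (i =P k) => [Ei|Hne].
  + by subst i; rewrite eqxx Hvk.
  + have -> : (i.+1 == k.+1) = false by apply/eqP; lia.
    apply: Hvs; lia.
Qed.

Definition IPath (T : finType) (S : rel T) L (v : nat -> T) :=
  (forall i j, i < L -> j < L -> S (v i) (v j) = (natdist i j == 1)) /\
  (forall i j, i < L -> j < L -> v i = v j -> i = j).

Lemma layer_ipath (T : finType) (S : rel T) x k (v : nat -> T) :
  symmetric S -> irreflexive S ->
  (forall i, i <= k -> fresh S x i (v i)) -> (forall i, i < k -> S (v i) (v i.+1)) ->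
  IPath S k.+1 v.
Proof.
move=> Ssym Sirr Hf Hs.
have key : forall i j, i < j -> j <= k -> S (v i) (v j) = (j == i.+1).
  move=> i j Hij Hj; case: eqP => [->|/eqP Hne]; first by apply: Hs; apply: leq_trans Hj.
  apply/negP => HS.
  have Hin : v j \in ball S x i.+1 by apply: ball_step HS; move: (Hf i (ltnW (leq_trans Hij Hj))) => /andP [].
  have : v j \notin ball S x i.+1 by apply: fresh_notin (Hf j Hj) _; rewrite ltn_neqAle eq_sym Hne Hij.
  by rewrite Hin.
split.
- move=> i j Hi Hj; rewrite !ltnS in Hi Hj.
  case: (ltngtP i j) => [Hij|Hij|->].
  + rewrite key //; rewrite /natdist; apply/eqP/eqP; lia.
  + rewrite Ssym key //; rewrite /natdist; apply/eqP/eqP; lia.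
  + by rewrite Sirr /natdist subnn.
- move=> i j Hi Hj Hv; rewrite !ltnS in Hi Hj.
  case: (ltngtP i j) => [Hij|Hij|->] //.
  + have := fresh_notin (Hf j Hj) Hij; rewrite -Hv.
    by move: (Hf i Hi) => /andP [-> _].
  + have := fresh_notin (Hf i Hi) Hij; rewrite Hv.
    by move: (Hf j Hj) => /andP [-> _].
Qed.

Lemma IPath_shorter (T : finType) (S : rel T) L L' v : L' <= L -> IPath S L v -> IPath S L' v.
Proof.
move=> HL [H1 H2]; split=> i j Hi Hj; [apply: H1|apply: H2]; exact: leq_trans HL.
Qed.

Lemma comp_small (T : finType) (S : rel T) D L :
  symmetric S -> irreflexive S -> (forall z, #|[set y | S z y]| <= D) ->
  (forall v, ~ IPath S L v) -> forall x, #|[set y | connect S x y]| <= D.+1 ^ L.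
Proof.
move=> Ssym Sirr HD HnP x.
apply: leq_trans (ball_card x L HD).
apply: subset_leq_card; apply/subsetP => y; rewrite inE => /connect_ball [k Hk].
have [k' _ Hf] := fresh_exists Hk.
have [v [_ Hvf Hvs]] := layer_path Hf.
case: (ltnP k' L) => HkL.
  by apply: (subsetP (ball_mono S x (ltnW HkL))); move: Hf => /andP [].
exfalso; apply: (HnP v); apply: (IPath_shorter (L := k'.+1)); first exact: leqW.
exact: layer_ipath Hvf Hvs.
Qed.


Lemma fin_max (I : finType) (Q : I -> nat -> Prop) :
  (forall i L L', Q i L -> L <= L' -> Q i L') -> (forall i, exists L, Q i L) ->
  exists L, forall i, Q i L.
Proof.
move=> Hup Hex.
suff : forall s : seq I, exists L, forall i, i \in s -> Q i L.
  by move=> /(_ (enum I)) [L HL]; exists L => i; apply: HL; rewrite mem_enum.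
elim=> [|j s [L1 H1]]; first by exists 0.
have [L2 H2] := Hex j; exists (maxn L1 L2) => i; rewrite inE => /orP [/eqP ->|Hi].
- by apply: Hup H2 _; rewrite leq_maxr.
- by apply: Hup (H1 i Hi) _; rewrite leq_maxl.
Qed.

Lemma pigeon (I : finType) (P : I -> nat -> Prop) :
  (forall i L L', P i L' -> L <= L' -> P i L) -> (forall L, exists i, P i L) ->
  exists i, forall L, P i L.
Proof.
move=> Hdown Hex; apply: NNPP => Hn.
have H1 : forall i, exists L, ~ P i L.
  move=> i; apply: not_all_ex_not => HP; apply: Hn; by exists i.
have [L HL] := fin_max (Q := fun i L => ~ P i L) (fun i L L' H HL HP => H (Hdown _ _ _ HP HL)) H1.
by have [i Hi] := Hex L; apply: (HL i).
Qed.

Definition facto a (F : seq 'I_a -> Prop) := forall u v, infix u v -> F v -> F u.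
Definition Inf a (F : seq 'I_a -> Prop) := forall L, exists v, size v = L /\ F v.
Definition Ext a (F : seq 'I_a -> Prop) u := forall L, exists v, size v = L /\ F (u ++ v).

Lemma ext_step a (F : seq 'I_a -> Prop) u : facto F -> Ext F u -> exists x, Ext F (rcons u x).
Proof.
move=> Ff Hu.
have := @pigeon _ (fun x L => exists v, size v = L /\ F (rcons u x ++ v)).
case.
- move=> x L L' [v [Hv HF]] HL; exists (take L v); split; first by rewrite size_takel // Hv.
  apply: Ff HF; rewrite -[in X in infix _ X](cat_take_drop L v) catA; exact: prefix_infix.
- move=> L; have [[|x v] [Hv HF]] := Hu L.+1 => //; exists x, v; split; first by case: Hv.
  by rewrite cat_rcons.
- by move=> x Hx; exists x.
Qed.


Definition nextw a (a0 : 'I_a) (F : seq 'I_a -> Prop) (u : seq 'I_a) : 'I_a :=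
  epsilon (inhabits a0) (fun x => Ext F (rcons u x)).

Fixpoint prew a (a0 : 'I_a) (F : seq 'I_a -> Prop) k : seq 'I_a :=
  if k is k'.+1 then rcons (prew a0 F k') (nextw a0 F (prew a0 F k')) else [::].

Lemma konig a (a0 : 'I_a) (F : seq 'I_a -> Prop) : facto F -> Inf F ->
  exists w : nat -> 'I_a, forall s L, F (factor w s L).
Proof.
move=> Ff Hinf.
have Hext : forall k, Ext F (prew a0 F k).
  elim=> [|k IH] /=; first by move=> L; have [v Hv] := Hinf L; exists v.
  apply: (epsilon_spec (inhabits a0) (fun x => Ext F (rcons (prew a0 F k) x))).
  exact: ext_step.
pose w k := nextw a0 F (prew a0 F k).
have Hpre : forall k, prew a0 F k = [seq w i | i <- iota 0 k].
  elim=> [|k IH] //.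
  change (prew a0 F k.+1) with (rcons (prew a0 F k) (w k)).
  by rewrite IH -cats1 -addn1 iotaD map_cat.
exists w => s L.
have HF : F (prew a0 F (s + L)).
  have [v [Hv HF]] := Hext (s + L) 0; move: Hv HF; case: v => // _; by rewrite cats0.
apply: Ff HF; rewrite Hpre iotaD map_cat; apply: infix_catl.
rewrite /factor add0n.
have -> : iota s L = map (addn s) (iota 0 L) by rewrite -iotaDl addn0.
rewrite -map_comp; exact: infix_refl.
Qed.


Definition avoidF a (G : seq 'I_a -> Prop) (u : seq 'I_a) : seq 'I_a -> Prop :=
  fun v => G v /\ ~~ infix u v.

Definition stepF a (i : nat) (G : seq 'I_a -> Prop) : seq 'I_a -> Prop :=
  match unpickle i with
  | Some u => if excluded_middle_informative (Inf (avoidF G u)) then avoidF G u else G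
  | None => G
  end.

Fixpoint Fi a (F : seq 'I_a -> Prop) i : seq 'I_a -> Prop :=
  if i is i'.+1 then stepF i' (Fi F i') else F.

Lemma stepF_sub a (i : nat) (G : seq 'I_a -> Prop) v : stepF i G v -> G v.
Proof.
rewrite /stepF; case: (unpickle i) => [u|] //.
by case: (excluded_middle_informative (Inf (avoidF G u))) => // _ [].
Qed.

Lemma stepF_fact a (i : nat) (G : seq 'I_a -> Prop) : facto G -> facto (stepF i G).
Proof.
move=> HG; rewrite /stepF; case: (unpickle i) => [u|] //.
destruct (excluded_middle_informative _) as [HI|HI] => //.
move=> x y Hxy [Gy Ay]; split; first exact: HG Hxy Gy.
apply/negP => Hux; move/negP: Ay; apply; exact: infix_trans Hux Hxy.
Qed.

Lemma stepF_inf a (i : nat) (G : seq 'I_a -> Prop) : Inf G -> Inf (stepF i G).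
Proof.
move=> HG; rewrite /stepF; case: (unpickle i) => [u|] //.
by destruct (excluded_middle_informative _).
Qed.

Lemma Fi_fact a (F : seq 'I_a -> Prop) i : facto F -> facto (Fi F i).
Proof. move=> HF; elim: i => [|i IH] //=; exact: stepF_fact. Qed.

Lemma Fi_inf a (F : seq 'I_a -> Prop) i : Inf F -> Inf (Fi F i).
Proof. move=> HF; elim: i => [|i IH] //=; exact: stepF_inf. Qed.

Lemma Fi_dec a (F : seq 'I_a -> Prop) i j v : i <= j -> Fi F j v -> Fi F i v.
Proof.
move=> /subnK <-; elim: (j - i) => [|e IH] //= H; apply: IH; exact: stepF_sub H.
Qed.

Definition Finf a (F : seq 'I_a -> Prop) v := forall i, Fi F i v.

Lemma Finf_fact a (F : seq 'I_a -> Prop) : facto F -> facto (Finf F).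
Proof. move=> HF u v Huv Hv i; exact: Fi_fact HF _ _ Huv (Hv i). Qed.

Lemma Finf_inf a (F : seq 'I_a -> Prop) : Inf F -> Inf (Finf F).
Proof.
move=> HF L; apply: NNPP => Hn.
have H1 : forall t : L.-tuple 'I_a, exists i, ~ Fi F i t.
  move=> t; apply: not_all_ex_not => Ht; apply: Hn; exists t; by rewrite size_tuple.
have [I HI] := @fin_max (L.-tuple 'I_a) (fun t i => ~ Fi F i t)
   (fun t i j H Hij HF' => H (Fi_dec Hij HF')) H1.
have [v [Hv HFv]] := Fi_inf I HF L.
have Hs : size v == L by rewrite Hv.
by apply: (HI (Tuple Hs)).
Qed.

Lemma recurrent a (a0 : 'I_a) (F : seq 'I_a -> Prop) : facto F -> Inf F ->
  exists w : nat -> 'I_a, almost_periodic w /\ forall s L, F (factor w s L).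
Proof.
move=> Ff Hinf.
have [w Hw] := konig a0 (Finf_fact Ff) (Finf_inf Hinf).
exists w; split; last by move=> s L; exact: (Hw s L 0).
move=> s L _; set u := factor w s L.
have Hu := Hw s L (pickle u).+1; rewrite /= /stepF pickleK in Hu.
move: Hu; destruct (excluded_middle_informative _) as [HI|Hn]; [move=> [_ Hn] | move=> _].
  by rewrite infix_refl in Hn.
have [L0 HL0] := not_all_ex_not _ _ Hn.
exists L0 => s' L' _ HL'.
set f := factor w s' L'.
have Hsf : size f = L' by rewrite size_map size_iota.
apply: (infix_trans (y := take L0 f)); last exact: infix_take.
apply: NNPP => Hni; apply: HL0; exists (take L0 f); split; first by rewrite size_takel // Hsf.
split; first by apply: (Finf_fact Ff (infix_take f L0)); exact: Hw.
by apply/negP.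
Qed.


Definition Dleb n (N : 'I_n -> {set 'I_n}) (U W : {set 'I_n}) d : bool :=
  [forall u in U, #|N u :&: W| <= d] && [forall w in W, #|N w :&: U| <= d].

Lemma DlebP n (N : 'I_n -> {set 'I_n}) U W d : reflect (Delta_le N U W d) (Dleb N U W d).
Proof.
apply: (iffP andP) => [[/forall_inP H1 /forall_inP H2]|[H1 H2]]; split => //;
  by apply/forall_inP.
Qed.

Definition unionV n l (V : {ffun 'I_l -> {set 'I_n}}) : {set 'I_n} := \bigcup_(i < l) V i.
Definition qV n l (V : {ffun 'I_l -> {set 'I_n}}) x : option 'I_l := [pick i | x \in V i].
Definition HqV n l (V : {ffun 'I_l -> {set 'I_n}}) (Hf : {ffun 'I_l * 'I_l -> bool}) x y :=
  match qV V x, qV V y with Some a, Some b => Hf (a, b) | _, _ => false end.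
Definition Srel n (g : graph n) l (V : {ffun 'I_l -> {set 'I_n}}) Hf : rel 'I_n :=
  fun x y => [&& x \in unionV V, y \in unionV V, x != y & ((x, y) \in g) (+) HqV V Hf x y].
Definition Hb n (g : graph n) l (V : {ffun 'I_l -> {set 'I_n}}) d : {ffun 'I_l * 'I_l -> bool} :=
  [ffun ab => ~~ Dleb (nbhd g) (V ab.1) (V ab.2) d].

Definition goodV n (g : graph n) l (V : {ffun 'I_l -> {set 'I_n}}) d c :=
  [/\ (forall i j x, x \in V i -> x \in V j -> i = j), #|~: unionV V| < c &
      forall i j, Delta_le (nbhd g) (V i) (V j) d \/ Delta_le (nonnbhd g) (V i) (V j) d].

Lemma Delta_transfer m n (N' : 'I_m -> {set 'I_m}) (N : 'I_n -> {set 'I_n}) (f : 'I_m -> 'I_n) (U W : {set 'I_m}) d :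
  injective f -> (forall y (B : {set 'I_m}), N (f y) :&: f @: B = f @: (N' y :&: B)) ->
  Delta_le N' U W d -> Delta_le N (f @: U) (f @: W) d.
Proof.
move=> Hf HN [H1 H2]; split => x /imsetP [y Hy ->]; rewrite HN card_imset //; [exact: H1|exact: H2].
Qed.

Lemma witness n (g : graph n) l d c m (f : 'I_m -> 'I_n) :
  injective f -> n - m < c -> strong_ld_graph (induced g f) l d ->
  exists V : {ffun 'I_l -> {set 'I_n}}, goodV g V d c.
Proof.
move=> Hf Hc [p [HD _]].
exists [ffun i => f @: [set y | p y == i]]; split.
- move=> i j x; rewrite !ffunE => /imsetP [y1 Hy1 ->] /imsetP [y2 Hy2 /Hf E].
  by move: Hy1 Hy2; rewrite !inE E => /eqP <- /eqP.
- have -> : unionV [ffun i => f @: [set y | p y == i]] = f @: setT.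
    apply/setP => x; apply/bigcupP/imsetP => [[i _]|[y _ ->]].
      by rewrite ffunE => /imsetP [y _ ->]; exists y.
    by exists (p y) => //; rewrite ffunE; apply: imset_f; rewrite inE.
  have E := cardsC (f @: setT); rewrite card_imset // cardsT !card_ord in E.
  move: E Hc; move: (#|~: _|) => k; lia.
- move=> i j; rewrite !ffunE; case: (HD i j) => H; [left|right];
    (apply: (Delta_transfer Hf _ H) => y B; apply/setP => z; apply/setIP/imsetP).
  + move=> [Hz /imsetP [b Hb E]]; subst z; exists b => //; move: Hz; rewrite /nbhd !inE => ->; by rewrite Hb.
  + move=> [b]; rewrite /nbhd !inE => /andP [Hyb Hb] ->; split; [by []|exact: imset_f].
  + move=> [Hz /imsetP [b Hb E]]; subst z; exists b => //; move: Hz; rewrite /nonnbhd /nbhd !inE (inj_eq Hf) => Hz.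
    by rewrite Hz Hb.
  + move=> [b]; rewrite /nonnbhd /nbhd !inE => /andP [Hyb Hb] ->; split; last exact: imset_f.
    by rewrite (inj_eq Hf).
Qed.


Lemma qV_in n l (V : {ffun 'I_l -> {set 'I_n}}) i x :
  (forall i j x, x \in V i -> x \in V j -> i = j) -> x \in V i -> qV V x = Some i.
Proof.
move=> Hd Hx; rewrite /qV; case: pickP => [j Hj|H]; first by rewrite (Hd _ _ _ Hj Hx).
by move: (H i); rewrite Hx.
Qed.

Lemma unionVP n l (V : {ffun 'I_l -> {set 'I_n}}) x :
  reflect (exists i, x \in V i) (x \in unionV V).
Proof. apply: (iffP bigcupP) => [[i _ H]|[i H]]; by exists i. Qed.

Lemma Hb_sym n (g : graph n) l (V : {ffun 'I_l -> {set 'I_n}}) d a b :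
  Hb g V d (a, b) = Hb g V d (b, a).
Proof. by rewrite !ffunE /= /Dleb andbC. Qed.

Lemma HqV_sym n l (V : {ffun 'I_l -> {set 'I_n}}) (Hf : {ffun 'I_l * 'I_l -> bool}) :
  (forall a b, Hf (a, b) = Hf (b, a)) -> forall x y, HqV V Hf x y = HqV V Hf y x.
Proof. move=> Hs x y; rewrite /HqV; case: (qV V x) => [a|]; case: (qV V y) => [b|] //. Qed.

Lemma Srel_sym n (g : graph n) l (V : {ffun 'I_l -> {set 'I_n}}) (Hf : {ffun 'I_l * 'I_l -> bool}) :
  simple_graph g -> (forall a b, Hf (a, b) = Hf (b, a)) -> symmetric (Srel g V Hf).
Proof.
move=> [_ Hg] Hs x y; rewrite /Srel (HqV_sym V Hs x y) Hg eq_sym.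
by case: (x \in unionV V); case: (y \in unionV V).
Qed.

Lemma Srel_irr n (g : graph n) l (V : {ffun 'I_l -> {set 'I_n}}) (Hf : {ffun 'I_l * 'I_l -> bool}) : irreflexive (Srel g V Hf).
Proof. by move=> x; rewrite /Srel eqxx !andbF. Qed.

Lemma Srel_deg n (g : graph n) l (V : {ffun 'I_l -> {set 'I_n}}) d c :
  goodV g V d c -> forall x, #|[set y | Srel g V (Hb g V d) x y]| <= l * d.
Proof.
move=> [Hd _ HD] x.
case Hx: (x \in unionV V); last first.
  rewrite (_ : [set y | _] = set0) ?cards0 //; apply/setP => y; by rewrite !inE /Srel Hx.
move/unionVP: Hx => [a Ha].
have Hsub : [set y | Srel g V (Hb g V d) x y] \subset
            \bigcup_(b < l) ([set y | Srel g V (Hb g V d) x y] :&: V b).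
  apply/subsetP => y Hy; move: (Hy); rewrite inE /Srel => /and4P [_ /unionVP [b Hb'] _ _].
  by apply/bigcupP; exists b => //; rewrite inE Hy Hb'.
apply: leq_trans (subset_leq_card Hsub) _.
apply: leq_trans (card_bigcup_le _ _ _) _.
rewrite -[l in l * d]card_ord -sum_nat_const; apply: leq_sum => b _.
have Hq : forall y, y \in V b -> HqV V (Hb g V d) x y = Hb g V d (a, b).
  by move=> y Hy; rewrite /HqV (qV_in Hd Ha) (qV_in Hd Hy).
case Hab: (Hb g V d (a, b)).
- have : Delta_le (nonnbhd g) (V a) (V b) d.
    case: (HD a b) => // /DlebP H; by rewrite ffunE /= H in Hab.
  move=> [H1 _]; apply: leq_trans (H1 x Ha); apply: subset_leq_card; apply/subsetP => y.
  rewrite !inE => /andP [Hs Hy]; rewrite Hy andbT; move: Hs; rewrite /Srel (Hq y Hy) Hab.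
  move=> /and4P [_ _ Hne Hg]; rewrite negb_or; apply/andP; split.
    by move: Hg; case: ((x, y) \in g).
  by rewrite eq_sym.
- have : Delta_le (nbhd g) (V a) (V b) d.
    by apply/DlebP; move: Hab; rewrite ffunE /= => /negbFE.
  move=> [H1 _]; apply: leq_trans (H1 x Ha); apply: subset_leq_card; apply/subsetP => y.
  rewrite !inE => /andP [Hs Hy]; rewrite Hy andbT; move: Hs; rewrite /Srel (Hq y Hy) Hab.
  move=> /and4P [_ _ Hne Hg]; by move: Hg; case: ((x, y) \in g).
Qed.

Definition GoodW (X : graph_class) l (Hf : {ffun 'I_l * 'I_l -> bool}) (a0 : 'I_l) (ws : seq 'I_l) : Prop :=
  forall m (g2 : graph m) (u : 'I_m -> nat) (sigma : 'I_m -> 'I_m),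
    (forall i, u i < size ws) -> (forall i j : 'I_m, i < j -> u i < u j) -> bijective sigma ->
    (forall i j, ((i, j) \in g2) = GwH_adj (fun p => nth a0 ws p) (fun x y => Hf (x, y)) (u (sigma i)) (u (sigma j))) ->
    X m g2.

Lemma nth_mid (T : Type) (x0 : T) p u q k : k < size u -> nth x0 (p ++ u ++ q) (size p + k) = nth x0 u k.
Proof. by move=> Hk; rewrite nth_cat ltnNge leq_addr /= addKn nth_cat Hk. Qed.

Lemma GoodW_fact X l Hf (a0 : 'I_l) : facto (GoodW X Hf a0).
Proof.
move=> u v /infixP [p [q ->]] Hv m g2 uu sigma Hu Hmono Hbij Hg.
apply: (Hv m g2 (fun i => size p + uu i) sigma).
- move=> i; rewrite !size_cat ltn_add2l; exact: ltn_addr (Hu i).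
- move=> i j Hij; rewrite ltn_add2l; exact: Hmono.
- exact: Hbij.
- move=> i j; rewrite Hg /GwH_adj /natdist.
  by rewrite !nth_mid ?Hu // !subnDl.
Qed.

Lemma path_good X n (g : graph n) l (V : {ffun 'I_l -> {set 'I_n}}) d c (a0 : 'I_l) L v :
  class_of_simple_graphs X -> hereditary X -> X n g -> goodV g V d c -> 1 < L ->
  IPath (Srel g V (Hb g V d)) L v ->
  GoodW X (Hb g V d) a0 [seq odflt a0 (qV V (v i)) | i <- iota 0 L].
Proof.
move=> Hsimp Hher Xg [Hd _ _] HL [HP1 HP2] m g2 u sigma Hu Hmono Hbij Hg.
have Hsz : size [seq odflt a0 (qV V (v i)) | i <- iota 0 L] = L by rewrite size_map size_iota.
have HuL : forall i, u i < L by move=> i; rewrite -Hsz.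
have Huinj : injective u.
  move=> i j Hij; case: (ltngtP i j) => [H|H|/val_inj //]; have := Hmono _ _ H; by rewrite Hij ltnn.
have Hinj : injective (fun i => v (u (sigma i))).
  move=> i j /(HP2 _ _ (HuL _) (HuL _)) /Huinj; exact: (bij_inj Hbij).
have HT : forall k, k < L -> exists al, v k \in V al.
  move=> k Hk.
  have [k' [Hk' Hnd]] : exists k', k' < L /\ natdist k k' = 1.
    case: k Hk => [|k] Hk; [exists 1 | exists k]; split => //; rewrite /natdist; lia.
  have : Srel g V (Hb g V d) (v k) (v k') by rewrite HP1 // Hnd.
  by rewrite /Srel => /and4P [/unionVP H _ _ _].
have Hnth : forall k, k < L -> forall al, v k \in V al -> nth a0 [seq odflt a0 (qV V (v i)) | i <- iota 0 L] k = al.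
  move=> k Hk al Hal; rewrite (nth_map 0) ?size_iota // nth_iota // add0n (qV_in Hd Hal) //.
have [Hirr Hsym] := Hsimp _ _ Xg.
suff -> : g2 = induced g (fun i => v (u (sigma i))) by apply: Hher.
apply/setP => -[i j]; rewrite Hg inE /=.
set a := u (sigma i); set b := u (sigma j).
have [al Hal] := HT a (HuL _); have [be Hbe] := HT b (HuL _).
rewrite /GwH_adj /= (Hnth _ (HuL _) _ Hal) (Hnth _ (HuL _) _ Hbe).
case: (a =P b) => [Eab|Nab].
  by rewrite Eab /natdist subnn (negbTE (Hirr _)).
have Hvne : v a != v b by apply/eqP => /(HP2 _ _ (HuL _) (HuL _)).
have HS := HP1 a b (HuL _) (HuL _).
have Ha' : v a \in unionV V by apply/unionVP; exists al.
have Hb' : v b \in unionV V by apply/unionVP; exists be.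
rewrite /Srel /HqV (qV_in Hd Hal) (qV_in Hd Hbe) Hvne Ha' Hb' /= in HS.
have Hnd : natdist a b != 0 by rewrite /natdist; apply/eqP; move: Nab; lia.
move: HS Hnd.
case E: (natdist a b == 1) => /=.
- rewrite (eqP E) /=; by case: ((v a, v b) \in g); case: (Hb g V d (al, be)).
- move=> HS Hnd; have -> : 1 < natdist a b by move: Hnd E; case: (natdist a b) => [|[|]].
  by move: HS; case: ((v a, v b) \in g); case: (Hb g V d (al, be)).
Qed.


Definition rowsN n c (R : {ffun 'I_c -> {set 'I_n}}) (i : nat) (y : 'I_n) : bool :=
  [exists o : 'I_c, (val o == i) && (y \in R o)].

Definition rows_of n c (g : graph n) (T : {set 'I_n}) : {ffun 'I_c -> {set 'I_n}} :=
  [ffun o : 'I_c => [set y | [exists x, [&& x \notin T, index x (enum (~: T)) == val o & (x, y) \in g]]]].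

Definition dec n l c (code : {ffun 'I_l -> {set 'I_n}} * {ffun 'I_l * 'I_l -> bool} *
   {ffun 'I_c -> {set 'I_n}} * {set 'I_n * 'I_n}) : graph n :=
  let: (V, Hf, R, Sg) := code in
  [set xy | if xy.1 \notin unionV V then rowsN R (index xy.1 (enum (~: unionV V))) xy.2
            else if xy.2 \notin unionV V then rowsN R (index xy.2 (enum (~: unionV V))) xy.1
            else (xy.1 != xy.2) && ((xy \in Sg) (+) HqV V Hf xy.1 xy.2)].

Lemma rowsN_of n c (g : graph n) (T : {set 'I_n}) x y :
  #|~: T| < c -> x \notin T -> rowsN (rows_of c g T) (index x (enum (~: T))) y = ((x, y) \in g).
Proof.
move=> Hc Hx; have HxC : x \in enum (~: T) by rewrite mem_enum inE.
apply/existsP/idP => [[o /andP [/eqP Ho]]|Hg].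
  rewrite /rows_of ffunE inE => /existsP [x' /and3P [Hx' /eqP Hi Hg]].
  have Hx'C : x' \in enum (~: T) by rewrite mem_enum inE.
  suff <- : x' = x by [].
  by rewrite -[x'](nth_index x Hx'C) Hi Ho nth_index.
have Hlt : index x (enum (~: T)) < c by apply: ltn_trans Hc; rewrite cardE index_mem.
exists (Ordinal Hlt); rewrite eqxx /= /rows_of ffunE inE; apply/existsP; exists x.
by rewrite Hx eqxx Hg.
Qed.

Lemma dec_ok n l c (g : graph n) (V : {ffun 'I_l -> {set 'I_n}}) (Hf : {ffun 'I_l * 'I_l -> bool}) :
  simple_graph g -> #|~: unionV V| < c ->
  g = dec (V, Hf, rows_of c g (unionV V), [set xy | Srel g V Hf xy.1 xy.2]).
Proof.
move=> [Hirr Hsym] Hc; apply/setP => -[x y]; rewrite /dec inE /=.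
case: ifP => Hx; first by rewrite rowsN_of.
case: ifP => Hy; first by rewrite rowsN_of // Hsym.
rewrite inE /Srel /= (negbFE Hx) (negbFE Hy) /=.
case: (x =P y) => [<-|/eqP Hne] /=; first by rewrite (negbTE (Hirr x)).
by case: ((x, y) \in g); case: (HqV V Hf x y).
Qed.

Definition compr n (r : {ffun 'I_n -> 'I_n}) x : {set 'I_n} := [set z | r z == r x].

Definition dec2 n s (rc : {ffun 'I_n -> 'I_n} * {ffun 'I_n -> {set 'I_s}}) : {set 'I_n * 'I_n} :=
  [set xy | (rc.1 xy.1 == rc.1 xy.2) &&
     [exists o : 'I_s, (val o == index xy.2 (enum (compr rc.1 xy.1))) && (o \in rc.2 xy.1)]].

Lemma compr_root n (S : rel 'I_n) x : symmetric S ->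
  compr [ffun z => root S z] x = [set z | connect S x z].
Proof.
move=> Ssym; have Hc := sym_connect_sym Ssym.
apply/setP => z; rewrite !inE !ffunE (root_connect Hc).
exact: Hc.
Qed.

Lemma dec2_ok n s (S : rel 'I_n) : symmetric S -> (forall x, #|[set y | connect S x y]| <= s) ->
  [set xy | S xy.1 xy.2] =
  dec2 ([ffun z => root S z],
        [ffun x => [set o : 'I_s | S x (nth x (enum (compr [ffun z => root S z] x)) o)]]).
Proof.
move=> Ssym Hs; apply/setP => -[x y]; rewrite /dec2 !inE /=.
set r := [ffun z => root S z].
have Hcomp : forall y, (y \in compr r x) = connect S x y by move=> y'; rewrite (compr_root _ Ssym) inE.
apply/idP/andP => [Sxy|[Hr /existsP [o /andP [/eqP Ho]]]].
  have Cxy : connect S x y by apply: connect1.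
  have Hy : y \in enum (compr r x) by rewrite mem_enum Hcomp.
  split; first by rewrite !ffunE (root_connect (sym_connect_sym Ssym)).
  have Hlt : index y (enum (compr r x)) < s.
    by apply: leq_trans (Hs x); rewrite -(compr_root x Ssym) cardE index_mem.
  apply/existsP; exists (Ordinal Hlt); rewrite eqxx /= ffunE inE /=.
  by rewrite nth_index.
rewrite ffunE inE Ho nth_index //.
by rewrite mem_enum inE eq_sym.
Qed.

Definition Rset n t : {set {ffun 'I_n -> 'I_n}} := [set r : {ffun 'I_n -> 'I_n} | t <= #|[set x | r x == x]|].

Lemma root_Rset n s (S : rel 'I_n) : symmetric S -> 0 < s ->
  (forall x, #|[set y | connect S x y]| <= s) -> [ffun z => root S z] \in Rset n (n %/ s).
Proof.
move=> Ssym Hs0 Hs; rewrite inE; set r := [ffun z => root S z].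
have Hcs := sym_connect_sym Ssym.
have Hn : n <= #|[set x | r x == x]| * s.
  have : [set: 'I_n] \subset \bigcup_(rho in [set x | r x == x]) compr r rho.
    apply/subsetP => x _; apply/bigcupP; exists (root S x).
      by rewrite inE ffunE (root_root Hcs).
    by rewrite inE !ffunE (root_root Hcs).
  move/subset_leq_card; rewrite cardsT card_ord => H; apply: leq_trans H _.
  apply: leq_trans (card_bigcup_le _ _ _) _.
  rewrite -sum_nat_const; apply: leq_sum => rho _; by rewrite compr_root.
rewrite -(leq_pmul2r Hs0); exact: leq_trans (leq_divM n s) Hn.
Qed.

Lemma card_sets (T : finType) : #|{set T}| = 2 ^ #|T|.
Proof. by rewrite -(cardsT T) -card_powerset powersetT cardsT. Qed.

Lemma card_Fam n (A : {set 'I_n}) :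
  #|[set r : {ffun 'I_n -> 'I_n} | [forall x in A, r x == x]]| <= n ^ (n - #|A|).
Proof.
pose h (r : {ffun 'I_n -> 'I_n}) := [ffun i : 'I_#|~: A| => r (enum_val i)].
rewrite -(card_in_imset (f := h)); last first.
  move=> r1 r2; rewrite !inE => /forall_inP H1 /forall_inP H2 Eh; apply/ffunP => x.
  case Hx: (x \in A); first by rewrite (eqP (H1 x Hx)) (eqP (H2 x Hx)).
  have HxC : x \in ~: A by rewrite inE Hx.
  rewrite -(enum_rankK_in HxC HxC).
  by move/ffunP: Eh => /(_ (enum_rank_in HxC x)); rewrite !ffunE.
apply: leq_trans (max_card _) _; rewrite card_ffun.
have E := cardsC A; rewrite card_ord in E.
have -> : #|~: A| = n - #|A| by move: E; move: #|~: A| => k; lia.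
by rewrite !card_ord.
Qed.

Lemma card_Rset n t : 0 < n -> #|Rset n t| <= 2 ^ n * n ^ (n - t).
Proof.
move=> Hn.
have Hsub : Rset n t \subset \bigcup_(A : {set 'I_n} | t <= #|A|)
     [set r : {ffun 'I_n -> 'I_n} | [forall x in A, r x == x]].
  apply/subsetP => r; rewrite inE => Hr; apply/bigcupP; exists [set x | r x == x] => //.
  by rewrite inE; apply/forall_inP => x; rewrite inE.
apply: leq_trans (subset_leq_card Hsub) _.
apply: leq_trans (card_bigcup_le _ _ _) _.
apply: (@leq_trans (\sum_(A : {set 'I_n}) n ^ (n - t))).
  rewrite big_mkcond /=; apply: leq_sum => A _; case: ifP => // HA.
  apply: leq_trans (card_Fam A) _; apply: leq_pexp2l => //; exact: leq_sub2l.
by rewrite sum_nat_const card_sets card_ord.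
Qed.


Lemma count_bound n l c s (P : graph n -> Prop) : 0 < n -> 0 < s ->
  (forall g : graph n, P g -> exists (V : {ffun 'I_l -> {set 'I_n}}) (Hf : {ffun 'I_l * 'I_l -> bool}),
     [/\ simple_graph g, #|~: unionV V| < c, symmetric (Srel g V Hf) &
         forall x, #|[set y | connect (Srel g V Hf) x y]| <= s]) ->
  forall Sx : {set graph n}, (forall g, g \in Sx -> P g) ->
  #|Sx| <= (2 ^ n) ^ l * 2 ^ (l * l) * (2 ^ n) ^ c * (2 ^ n * n ^ (n - n %/ s) * (2 ^ s) ^ n).
Proof.
move=> Hn Hs HP Sx HSx.
pose Codes := setX (setX (setX [set: {ffun 'I_l -> {set 'I_n}}] [set: {ffun 'I_l * 'I_l -> bool}])
                         [set: {ffun 'I_c -> {set 'I_n}}])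
                   (@dec2 n s @: setX (Rset n (n %/ s)) [set: {ffun 'I_n -> {set 'I_s}}]).
have Hsub : Sx \subset @dec n l c @: Codes.
  apply/subsetP => g Hg; have [V [Hf [Hsimp Hc Hsym Hcomp]]] := HP g (HSx g Hg).
  rewrite (dec_ok Hf Hsimp Hc); apply: imset_f.
  rewrite !inE /= (dec2_ok Hsym Hcomp); apply: imset_f.
  by rewrite in_setX in_setT andbT (root_Rset Hsym Hs Hcomp).
apply: leq_trans (subset_leq_card Hsub) _.
apply: leq_trans (leq_imset_card _ _) _.
rewrite !cardsX !cardsT !card_ffun !card_sets !card_prod !card_bool !card_ord.
apply: leq_mul => //.
apply: leq_trans (leq_imset_card _ _) _.
rewrite cardsX cardsT card_ffun card_sets !card_ord.
apply: leq_mul => //; exact: card_Rset.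
Qed.


Theorem theorem3p13 (X : graph_class) (l d c : nat) :
  class_of_simple_graphs X ->
  hereditary X ->
  above_Bell X ->
  ~ dist_number_infinite X ->
  (forall n (g : graph n), X n g ->
     exists m (f : 'I_m -> 'I_n),
       [/\ injective f, n - m < c & strong_ld_graph (induced g f) l d]) ->
  exists a (w : nat -> 'I_a) (H : rel 'I_a),
    [/\ a <= l, symmetric H, almost_periodic w &
        forall m (g : graph m), in_P w H g -> X m g].
Proof.
move=> Hsimp Hher HBell _ Hstr.
have Hw : forall n (g : graph n), X n g -> exists V : {ffun 'I_l -> {set 'I_n}}, goodV g V d c.
  move=> n g Xg; have [m [f [Hf Hc Hs]]] := Hstr n g Xg; exact: witness Hf Hc Hs.
have [a0 _] : exists a0 : 'I_l, True.
  have [N HN] := HBell 1 isT.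
  have [S [HS Hcard]] := HN (maxn N c) (leq_maxl _ _).
  rewrite mul0n expn0 expn1 in Hcard.
  have [g Hg] : exists g, g \in S by apply/set0Pn; rewrite -card_gt0.
  have [V [Hd Hc _]] := Hw _ _ (HS g Hg).
  have : unionV V != set0.
    apply/negP => /eqP E; move: Hc; rewrite E setC0 cardsT card_ord.
    by rewrite ltnNge leq_maxr.
  move=> /set0Pn [x /unionVP [i _]]; by exists i.
have Hgood : forall L, exists Hf : {ffun 'I_l * 'I_l -> bool},
    (forall a b, Hf (a, b) = Hf (b, a)) /\ exists ws, size ws = L /\ GoodW X Hf a0 ws.
  apply: NNPP => Hn; have [L0 HL0] := not_all_ex_not _ _ Hn.
  pose L := L0 + 2.
  have Hno : forall n (g : graph n), X n g -> forall V : {ffun 'I_l -> {set 'I_n}}, goodV g V d c ->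
      forall v, ~ IPath (Srel g V (Hb g V d)) L v.
    have HL2 : 1 < L0 + 2 by rewrite addn2.
    move=> n g Xg V HV v Hv; apply HL0; exists (Hb g V d); split; first exact: Hb_sym.
    have HG := path_good (a0 := a0) Hsimp Hher Xg HV HL2 Hv.
    set ws := [seq _ | _ <- _] in HG.
    exists (take L0 ws); split; first by rewrite size_takel // size_map size_iota leq_addr.
    exact: (GoodW_fact (infix_take ws L0) HG).
  pose s := (l * d).+1 ^ L.
  have Hs0 : 0 < s by rewrite expn_gt0.
  have Hk0 : 0 < 2 * s by rewrite muln_gt0 Hs0.
  have [N HN] := HBell (2 * s) Hk0.
  pose j := N + ((2*s) * (l + c + 1 + s) + (2*s) * (l * l) + 2 * s + 1).
  have Hj : N <= 2 ^ j by apply: leq_trans (ltnW (ltn_expl j (isT : 1 < 2))); rewrite leq_addr.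
  have [Sx [HSx Hineq]] := HN (2 ^ j) Hj.
  have Hn0 : 0 < 2 ^ j by rewrite expn_gt0.
  have Hbound := @count_bound (2 ^ j) l c s (X (2 ^ j)) Hn0 Hs0.
  have Hcb := Hbound _ Sx HSx.
  have : #|Sx| ^ (2 * s) < (2 ^ j) ^ ((2 * s - 1) * 2 ^ j).
    have Hjb : (2*s) * (l + c + 1 + s) + (2*s) * (l * l) + 2 * s + 1 <= j by rewrite /j leq_addl.
    apply: (leq_ltn_trans _ (arith l c s j Hs0 Hjb)).
    rewrite leq_exp2r ?muln_gt0 ?Hs0 //.
    apply: Hcb => g Xg.
    have [V HV] := Hw _ _ Xg; exists V, (Hb g V d).
    have Hsym := Srel_sym V (Hsimp _ _ Xg) (Hb_sym g V d).
    split => //; first exact: Hsimp; first by case: HV.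
    apply: comp_small Hsym (Srel_irr g V _) (Srel_deg HV) (Hno _ _ Xg V HV).
  by rewrite ltnNge Hineq.
have [Hf0 HP] : exists Hf0 : {ffun 'I_l * 'I_l -> bool}, forall L,
    (forall a b, Hf0 (a, b) = Hf0 (b, a)) /\ exists ws, size ws = L /\ GoodW X Hf0 a0 ws.
  apply: (@pigeon {ffun 'I_l * 'I_l -> bool}
     (fun Hf L => (forall a b, Hf (a, b) = Hf (b, a)) /\ exists ws, size ws = L /\ GoodW X Hf a0 ws)) => //.
  move=> Hf L L' [Hs [ws [Hws Hg]]] HL; split => //; exists (take L ws); split.
    by rewrite size_takel // Hws.
  exact: (GoodW_fact (infix_take ws L) Hg).
have Hsym0 : forall a b, Hf0 (a, b) = Hf0 (b, a) by case: (HP 0).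
have Hinf : Inf (GoodW X Hf0 a0) by move=> L; have [_ [ws [Hws Hg]]] := HP L; exists ws.
have [w [Hap Hfac]] := recurrent a0 (@GoodW_fact X l Hf0 a0) Hinf.
exists l, w, (fun x y => Hf0 (x, y)); split => //.
move=> m g [u [Hpos [Hmono [sigma [Hbij Hg]]]]].
pose N := (\max_(i < m) u i).+1.
have HuN : forall i, u i < N by move=> i; rewrite ltnS (leq_bigmax i).
have Hnth : forall p, p < N -> nth a0 (factor w 0 N) p = w p.
  by move=> p Hp; rewrite /factor (nth_map 0) ?size_iota // nth_iota.
apply: (Hfac 0 N m g u sigma) => //.
- by move=> i; rewrite size_map size_iota.
- move=> i j; rewrite Hg /GwH_adj /= !Hnth //.
Qed.
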